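(* Let $n>2$ and $G_n=BS(1,n)=\langle a,b\mid bab^{-1}=a^n\rangle$. Then for every $k>0$, $G_n$ is not $k$-chordal with respect to the generating set $\{a,b\}$.
   Context: For a group $G$ with finite generating set $S$, $S^{\pm1}=S\cup S^{-1}\setminus\{e\}$. A relation $s_1\cdots s_n=e$ with $n>2$, $s_i\in S^{\pm1}$, is simple if $s_p\cdots s_q=e$ holds exactly when $(p,q)=(1,n)$. $G$ is $k$-chordal with respect to $S$ if for every simple relation $s_1\cdots s_n=e$ with $n\ge k$ there exist $1\le i<j\le n$ and $s'_1,\dots,s'_r\in S^{\pm1}$ with $s_i\cdots s_j=s'_1\cdots s'_r$ and $r\le\min\{j-i,\,n-j+i-2\}$ (equivalently, every cycle of length at least $k$ in $Cay(G,S)$ has a shortcut). *)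

(* Defs.v *)
From mathcomp Require Import all_boot all_algebra.
Set Implicit Arguments. Unset Strict Implicit. Unset Printing Implicit Defensive.
Import GRing.Theory Num.Theory.

(* Model of BS(1,n) = <a,b | b a b^-1 = a^n> (n >= 2) as the group of affine
   maps x |-> n^e * x + t of the rationals, encoded as pairs (e, t) : int * rat.
   Group product is composition: (g * h)(x) = g (h x).
   a : x |-> x + 1,   b : x |-> n x.   Then b a b^-1 = a^n.
   For n >= 2 this is a faithful representation of BS(1,n). *)

Definition bs_mul (n : nat) (g h : int * rat) : int * rat :=
  ((g.1 + h.1)%R, ((n%:R : rat) ^ g.1 * h.2 + g.2)%R).

Definition bs_one : int * rat := (0%R, 0%R).

Inductive gen := Ga | Gainv | Gb | Gbinv.

Definition gen_val (s : gen) : int * rat :=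
  match s with
  | Ga => (0%R, 1%R)
  | Gainv => (0%R, (-1)%R)
  | Gb => (1%R, 0%R)
  | Gbinv => ((-1)%R, 0%R)
  end.

Definition word_val (n : nat) (w : seq gen) : int * rat :=
  foldr (fun s g => bs_mul n (gen_val s) g) bs_one w.

(* subword s_{p+1} ... s_{q+1} (0-indexed positions p..q) *)
Definition subword (w : seq gen) (p q : nat) : seq gen := drop p (take q.+1 w).

Definition simple_relation (n : nat) (w : seq gen) : Prop :=
  2 < size w /\
  forall p q : nat, p <= q -> q < size w ->
    (word_val n (subword w p q) = bs_one <-> (p = 0 /\ q = (size w).-1)).

(* k-chordal w.r.t. {a, b}; positions are 0-indexed, so i,j here correspond to
   i+1, j+1 in the paper; the bound r <= n - j + i - 2 is written as
   r + 2 + j <= N + i to avoid truncated subtraction. *)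
Definition k_chordal (n k : nat) : Prop :=
  forall w : seq gen, simple_relation n w -> k <= size w ->
    exists (i j : nat) (w' : seq gen),
      [/\ i < j, j < size w,
          word_val n (subword w i j) = word_val n w',
          size w' <= j - i &
          size w' + 2 + j <= size w + i].

(* Main.v *)
Require Import Defs.
From mathcomp Require Import all_boot all_order all_algebra.
Import Order.TTheory GRing.Theory Num.Theory.
From mathcomp Require Import zify ring lra.
Local Open Scope ring_scope.


Definition dlt (s : gen) : int := match s with Gb => 1 | Gbinv => -1 | _ => 0 end.
Definition aval (n : nat) (s : gen) (h : int) : rat :=
  match s with Ga => (n%:R : rat) ^ h | Gainv => - (n%:R : rat) ^ h | _ => 0 end.
Fixpoint wE (h : int) (w : seq gen) : int :=
  match w with [::] => h | s :: w => wE (h + dlt s) w end.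
Fixpoint wT (n : nat) (h : int) (w : seq gen) : rat :=
  match w with [::] => 0 | s :: w => aval n s h + wT n (h + dlt s) w end.

Lemma walk_correct n (hn : (0 < n)%N) w : forall h c,
  bs_mul n (h, c) (word_val n w) = (wE h w, c + wT n h w).
Proof.
elim: w => [|s w IH] h c /=.
  by rewrite /bs_mul /bs_one /= addr0 mulr0 add0r addr0.
have nz : (n%:R : rat) != 0 by rewrite pnatr_eq0 -lt0n.
transitivity (bs_mul n (h + dlt s, c + aval n s h) (word_val n w)); last first.
  by rewrite IH addrA.
rewrite /bs_mul /=; congr (_, _).
  by case: s => /=; rewrite addrA.
rewrite expfzDr //.
case: s => /=; rewrite ?expr0z ?expr1z; ring.
Qed.

Lemma wE_cat h u v : wE h (u ++ v) = wE (wE h u) v.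
Proof. by elim: u h => //= s u IH h. Qed.

Lemma wT_cat n h u v : wT n h (u ++ v) = wT n h u + wT n (wE h u) v.
Proof. elim: u h => /= [|s u IH] h; first by rewrite add0r. by rewrite IH addrA. Qed.
Definition isA (s : gen) : bool := match s with Ga | Gainv => true | _ => false end.
Fixpoint maxh (h : int) (w : seq gen) : int :=
  match w with [::] => h | s :: w => let M := maxh (h + dlt s) w in if h <= M then M else h end.
Fixpoint minh (h : int) (w : seq gen) : int :=
  match w with [::] => h | s :: w => let M := minh (h + dlt s) w in if M <= h then M else h end.

Lemma geom w : forall h, [/\ minh h w <= h <= maxh h w, minh h w <= wE h w <= maxh h w &
   (2 * (maxh h w - minh h w) - (h - wE h w) <= (count (predC isA) w)%:Z /\ wE h w <= h) \/
   (2 * (maxh h w - minh h w) - (wE h w - h) <= (count (predC isA) w)%:Z /\ h <= wE h w)].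
Proof.
elim: w => [|s w IH] h /=; first by split; lia.
have [] := IH (h + dlt s).
case: s => /=; case: ifP => ?; case: ifP => ? /=; move=> *; split; lia.
Qed.

Lemma npow_le1 (n : nat) (h : int) : (0 < n)%N -> h <= 0 -> `|(n%:R : rat) ^ h| <= 1.
Proof.
move=> n0; case: h => [k|k] hle.
  have -> : k = 0%N by lia.
  by rewrite expr0z normr1.
rewrite /exprz -natrX.
have hN : (0 < n ^ k.+1)%N by rewrite expn_gt0 n0.
rewrite ger0_norm; last by rewrite invr_ge0 ler0n.
rewrite invf_le1; last by rewrite ltr0n.
by rewrite ler1n.
Qed.

Lemma arith n (hn : (2 < n)%N) w : forall h (p : nat), maxh h w <= p ->
  exists A0 A1 : nat, exists T0 : rat, exists z : int,
  [/\ (A0 + A1 = count isA w)%N, wT n h w = T0 + n%:R * z%:~R, `|T0| <= A0%:R,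
      `|(n%:R : rat) * z%:~R| <= (A1 * n ^ p)%:R & (A0 = 0%N \/ minh h w <= 0)].
Proof.
elim: w => [|s w IH] h p /= hp.
  exists 0%N, 0%N, 0, 0%:Z; split.
  - by [].
  - by rewrite mulr0 addr0.
  - by rewrite normr0.
  - by rewrite mulr0 normr0.
  - by left.
have hp1 : h <= p by move: hp; case: ifP => ?; lia.
have hp2 : maxh (h + dlt s) w <= p by move: hp; case: ifP => ?; lia.
have [A0 [A1 [T0 [z [HA HT H0 H1 Hm]]]]] := IH _ _ hp2.
have Hmin : minh h (s :: w) <= minh (h + dlt s) w by rewrite /=; case: ifP => ?; lia.
have Hminh : minh h (s :: w) <= h by rewrite /=; case: ifP => ?; lia.
case E : s => [| | |]; rewrite E /= in HA HT Hm Hmin Hminh *;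
  try by (exists A0, A1, T0, z; split => //; [rewrite add0r | case: Hm; [left | right; lia]]).
all: move: (if _ then _ else _) Hmin Hminh => M Hmin Hminh; rewrite addr0 in HT Hm Hmin *.
all: have n0 : (0 < n)%N by lia.
all: have [hle|hgt] := lerP h 0.
- exists A0.+1, A1, (T0 + (n%:R : rat) ^ h), z; split.
  + lia.
  + by rewrite HT addrA [_ ^ h + _]addrC.
  + rewrite -addn1 natrD; apply: (le_trans (ler_normD _ _)); rewrite lerD //.
    exact: npow_le1.
  + exact: H1.
  + right; lia.
- case: h hgt hp1 HT Hm Hmin Hminh {hp hp2} => [[|k]|k] // hgt hp1 HT Hm Hmin Hminh.
  exists A0, A1.+1, T0, (z + (n ^ k)%N%:Z); split.
  + lia.
  + rewrite HT rmorphD /= mulrDr -exprnP exprS -natrX; ring.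
  + exact: H0.
  + rewrite rmorphD /= mulrDr; apply: (le_trans (ler_normD _ _)).
    rewrite -[X in _ + `|_ * X|]/((n ^ k)%:R) -natrM normr_nat mulSn natrD addrC; apply: lerD => //.
    rewrite ler_nat -expnS; apply: leq_pexp2l => //; lia.
  + by case: Hm; [left | right; lia].
- exists A0.+1, A1, (T0 - (n%:R : rat) ^ h), z; split.
  + lia.
  + by rewrite HT addrA [_ + T0]addrC.
  + rewrite -addn1 natrD; apply: (le_trans (ler_normD _ _)); rewrite lerD // normrN.
    exact: npow_le1.
  + exact: H1.
  + right; lia.
- case: h hgt hp1 HT Hm Hmin Hminh {hp hp2} => [[|k]|k] // hgt hp1 HT Hm Hmin Hminh.
  exists A0, A1.+1, T0, (z - (n ^ k)%N%:Z); split.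
  + lia.
  + rewrite HT rmorphB /= mulrBr -exprnP exprS -natrX; ring.
  + exact: H0.
  + rewrite rmorphB /= mulrBr; apply: (le_trans (ler_normB _ _)).
    rewrite -[X in _ + `|_ * X|]/((n ^ k)%:R) -natrM normr_nat mulSn natrD addrC; apply: lerD => //.
    rewrite ler_nat -expnS; apply: leq_pexp2l => //; lia.
  + by case: Hm; [left | right; lia].
Qed.

Close Scope ring_scope.

Lemma pow_ge n j : 2 < n -> 2 * j + 1 <= n ^ j.
Proof.
move=> hn; elim: j => [|j IH]; first by rewrite expn0.
rewrite expnS; nia.
Qed.

Lemma pow_ge2 n j : 2 < n -> 2 <= j -> 2 * j + 5 <= n ^ j.
Proof.
move=> hn; elim: j => [|j IH] //= hj.
case: (ltngtP j 1) => [|hj1|->]; first lia.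
  rewrite expnS; have := IH hj1; nia.
rewrite expnS expn1; nia.
Qed.

Lemma LA n m p A : 2 < n -> n ^ m <= A * n ^ p -> 2 * m + 1 <= A + 2 * p.
Proof.
move=> hn hA.
have n0 : 0 < n by lia.
have hA1 : 0 < A.
  case: A hA => // ; rewrite mul0n leqn0 expn_eq0; lia.
case: (leqP m p) => hmp; first lia.
move: hA; rewrite -{1}(subnK (ltnW hmp)) expnD leq_pmul2r ?expn_gt0 ?n0 // => hA.
have := pow_ge n (m - p) hn; lia.
Qed.

Lemma LB n m p A0 A1 : 2 < n -> 2 <= m -> 0 < A0 -> n ^ m - 1 <= A0 + A1 * n ^ p ->
  2 * m + 2 <= A0 + A1 + 2 * p.
Proof.
move=> hn hm hA0 hA.
have n0 : 0 < n by lia.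
have hm5 := pow_ge2 n m hn hm.
case: (leqP m p) => hmp.
  case: A1 hA => [|A1] hA; last lia.
  move: hA; rewrite mul0n addn0; lia.
case: p hmp hA => [|p] hmp hA.
  move: hA; rewrite expn0 muln1; lia.
have hX : 3 <= n ^ p.+1.
  have := leq_pexp2l n0 (isT : 1 <= p.+1); rewrite expn1; lia.
have hA' : n ^ (m - p.+1) * n ^ p.+1 - 1 <= A0 + A1 * n ^ p.+1.
  by rewrite -expnD subnK // ltnW.
have hY := pow_ge n (m - p.+1) hn.
move: hX hA' hY; set X := n ^ p.+1; set Y := n ^ (m - p.+1) => hX hA' hY.
suff : Y + 1 <= A0 + A1 by lia.
rewrite leqNgt; apply/negP => hc.
have h1 : (A0 + A1 - 1) * X <= (Y - 1) * X by apply: leq_mul; lia.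
have h2 : A0 <= 1 + (A0 - 1) * X by nia.
nia.
Qed.

Local Open Scope ring_scope.


Lemma unit_mult (n d : int) : 2 < n -> n * d = 1 \/ n * d = -1 -> False.
Proof. move=> hn h. have [hd|hd] := lerP 1 d. nia. have [hd'|hd'] := lerP d (-1). nia. have hd0 : d = 0 by lia. rewrite hd0 mulr0 in h. by case: h. Qed.

Lemma nomult n (z : int) (Q K : nat) : (2 < n)%N -> (K = n * Q + 1 \/ K + 1 = n * Q)%N ->
  `|(n%:R : rat) * z%:~R| = K%:R -> False.
Proof.
move=> hn hK.
have -> : (n%:R : rat) * z%:~R = (n%:Z * z)%:~R by rewrite intrM.
rewrite -intr_norm -[K%:R]/((K%:Z)%:~R) => /intr_inj hz.
have [hz0|hz0] := lerP 0 z.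
  rewrite ger0_norm in hz; last by nia.
  apply: (@unit_mult n%:Z (z - Q%:Z)); [lia | case: hK => hK; [left|right]; lia].
rewrite ltr0_norm in hz; last by nia.
apply: (@unit_mult n%:Z (- z - Q%:Z)); [lia | case: hK => hK; [left|right]; lia].
Qed.

Lemma setup n w (h1 : int) : (2 < n)%N -> 0 <= h1 ->
  exists p : nat, exists A0 A1 : nat, exists T0 : rat, exists z : int,
  [/\ maxh h1 w = p /\ (size w = A0 + A1 + count (predC isA) w)%N,
      wT n h1 w = T0 + n%:R * z%:~R, `|T0| <= A0%:R,
      `|(n%:R : rat) * z%:~R| <= (A1 * n ^ p)%:R & (A0 = 0%N \/ minh h1 w <= 0)].
Proof.
move=> hn h0.
have [/andP[Hq Hp] _ _] := geom w h1.
have [p Ep] : exists p : nat, maxh h1 w = p.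
  by exists `|maxh h1 w|%N; lia.
have := arith n hn w h1 p; rewrite Ep => /(_ (le_refl _)) [A0 [A1 [T0 [z [HA HT H0 H1 Hm]]]]].
exists p, A0, A1, T0, z; split => //; split => //.
by rewrite HA count_predC.
Qed.

Lemma boundK n (D T0 : rat) (z : int) (K A0 A1 p : nat) : `|D| = K%:R -> D = T0 + n%:R * z%:~R ->
  `|T0| <= A0%:R -> `|(n%:R : rat) * z%:~R| <= (A1 * n ^ p)%:R -> (K <= A0 + A1 * n ^ p)%N.
Proof.
move=> hK hD h0 h1; rewrite -(ler_nat rat) natrD -hK hD.
by apply: (le_trans (ler_normD _ _)); apply: lerD.
Qed.

Lemma B0 w (h1 h2 : nat) : wE h1 w = h2 ->
  (h1%:Z - h2%:Z <= (size w)%:Z) /\ (h2%:Z - h1%:Z <= (size w)%:Z).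
Proof.
move=> hE; have [/andP[Hq Hp] /andP[Hq2 Hp2] Hg] := geom w h1.
have := count_predC isA w; rewrite hE in Hq2 Hp2 Hg; lia.
Qed.

Lemma B1 n w (h1 h2 : nat) (D : rat) : (2 < n)%N -> wE h1 w = h2 -> wT n h1 w = D ->
  `|D| = 1 -> (h1 + h2 + 1 <= size w)%N.
Proof.
move=> hn hE hT hD.
have [p [A0 [A1 [T0 [z [[Ep Es] HT H0 H1 Hm]]]]]] := setup n w h1 hn ltac:(lia).
have [/andP[Hq Hp] /andP[Hq2 Hp2] Hg] := geom w h1.
rewrite hE Ep in Hq2 Hp2 Hg Hp.
case: (posnP A0) => HA0.
  rewrite HA0 normr_le0 in H0; move/eqP: H0 => H0.
  rewrite -hT HT H0 add0r in hD.
  by exfalso; apply: (nomult n z 0 1 hn _ hD); left; rewrite muln0.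
case: Hm => Hm; lia.
Qed.

Lemma B2 n m w (h1 h2 : nat) (D : rat) : (2 < n)%N -> wE h1 w = h2 -> wT n h1 w = D ->
  `|D| = (n ^ m)%:R -> (2 * m + 1 <= size w + h1 + h2)%N.
Proof.
move=> hn hE hT hD.
have [p [A0 [A1 [T0 [z [[Ep Es] HT H0 H1 Hm]]]]]] := setup n w h1 hn ltac:(lia).
have [/andP[Hq Hp] /andP[Hq2 Hp2] Hg] := geom w h1.
rewrite hE Ep in Hq2 Hp2 Hg Hp.
have hK := @boundK n D T0 z _ A0 A1 p hD (etrans (esym hT) HT) H0 H1.
have hnp : (0 < n ^ p)%N by rewrite expn_gt0; lia.
have hK' : (n ^ m <= (A0 + A1) * n ^ p)%N by rewrite mulnDl; nia.
have := LA n m p (A0 + A1) hn hK'.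
lia.
Qed.

Lemma B3 n m w (h1 h2 : nat) (D : rat) : (2 < n)%N -> (2 <= m)%N -> wE h1 w = h2 -> wT n h1 w = D ->
  `|D| = (n ^ m + 1)%:R \/ `|D| = (n ^ m - 1)%:R ->
  (2 * m + 2 <= size w + (h1 - h2) + (h2 - h1))%N.
Proof.
move=> hn hm hE hT hD.
have [p [A0 [A1 [T0 [z [[Ep Es] HT H0 H1 Hm]]]]]] := setup n w h1 hn ltac:(lia).
have [/andP[Hq Hp] /andP[Hq2 Hp2] Hg] := geom w h1.
rewrite hE Ep in Hq2 Hp2 Hg Hp.
have hnm : (n ^ m = n * n ^ m.-1)%N by rewrite -expnS prednK //; lia.
have hnm1 : (1 <= n ^ m)%N by rewrite expn_gt0; lia.
case: (posnP A0) => HA0.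
  rewrite HA0 normr_le0 in H0; move/eqP: H0 => H0.
  rewrite -hT HT H0 add0r in hD.
  exfalso; case: hD => hD.
    by apply: (nomult n z (n ^ m.-1) _ hn _ hD); left; rewrite hnm.
  by apply: (nomult n z (n ^ m.-1) _ hn _ hD); right; rewrite -hnm; lia.
have hK : (n ^ m - 1 <= A0 + A1 * n ^ p)%N.
  case: hD => hD; have := @boundK n D T0 z _ A0 A1 p hD (etrans (esym hT) HT) H0 H1; lia.
have := LB n m p A0 A1 hn hm HA0 hK.
case: Hm => Hm; lia.
Qed.


Definition cyc (m : nat) : seq gen :=
  nseq m Gb ++ nseq 1 Ga ++ nseq m Gbinv ++ nseq 1 Ga ++
  nseq m Gb ++ nseq 1 Gainv ++ nseq m Gbinv ++ nseq 1 Gainv.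

Lemma take_cat' (T : Type) k (u v : seq T) : take k (u ++ v) = take k u ++ take (k - size u) v.
Proof.
rewrite take_cat; case: ltnP => h; last by rewrite (take_oversize h).
have -> : (k - size u = 0)%N by lia.
by rewrite take0 cats0.
Qed.

Lemma take_nseq' (T : Type) i j (x : T) : take i (nseq j x) = nseq (minn i j) x.
Proof. elim: j i => [|j IH] [|i] //=; rewrite ?minn0 ?min0n // IH minnSS //. Qed.

Lemma wE_nseq h j s : wE h (nseq j s) = h + j%:Z * dlt s.
Proof. elim: j h => [|j IH] h /=; first by rewrite mul0r addr0. rewrite IH; case: s {IH} => /=; lia. Qed.

Lemma wT_nseq_b n h j : wT n h (nseq j Gb) = 0.
Proof. elim: j h => [|j IH] h //=; by rewrite IH addr0. Qed.
Lemma wT_nseq_bi n h j : wT n h (nseq j Gbinv) = 0.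
Proof. elim: j h => [|j IH] h //=; by rewrite IH addr0. Qed.
Lemma wT_nseq_a n h j : (j <= 1)%N -> wT n h (nseq j Ga) = j%:R * (n%:R : rat) ^ h.
Proof. by case: j => [|[|]] //= _; rewrite ?mul0r ?mul1r // addr0. Qed.
Lemma wT_nseq_ai n h j : (j <= 1)%N -> wT n h (nseq j Gainv) = - (j%:R * (n%:R : rat) ^ h).
Proof. by case: j => [|[|]] //= _; rewrite ?mul0r ?mul1r ?oppr0 // addr0. Qed.

Definition ht m k : nat :=
  if (k <= m)%N then k else if (k <= 2 * m + 1)%N then (2 * m + 1 - k)%N
  else if (k <= 3 * m + 2)%N then (k - (2 * m + 2))%N
  else if (k <= 4 * m + 3)%N then (4 * m + 3 - k)%N else 0%N.
Definition cv n m k : rat :=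
  if (k <= m)%N then 0 else if (k <= 2 * m + 1)%N then (n ^ m)%:R
  else if (k <= 3 * m + 2)%N then (n ^ m + 1)%:R
  else if (k <= 4 * m + 3)%N then 1 else 0.

Ltac fixmin := repeat match goal with |- context[minn ?a ?b] =>
  first [ let E := fresh "E" in (have E : (a = 0)%N by lia); rewrite (_ : minn a b = 0%N); last by rewrite E min0n
        | let E := fresh "E" in (have E : (b <= a)%N by lia); rewrite (minn_idPr E)
        | let E := fresh "E" in (have E : (a <= b)%N by lia); rewrite (minn_idPl E) ] end.

Lemma pow_int_nat n (x : int) (y : nat) : x = y%:Z -> (n%:R : rat) ^ x = (n ^ y)%:R.
Proof. by move=> ->; rewrite -exprnP natrX. Qed.

Lemma vert n m k : (0 < n)%N -> (k <= 4 * m + 4)%N ->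
  wE 0 (take k (cyc m)) = ht m k /\ wT n 0 (take k (cyc m)) = cv n m k.
Proof.
move=> n0 hk.
rewrite /cyc !take_cat' !take_nseq' !size_nseq !wE_cat !wT_cat !wE_nseq !wT_nseq_b !wT_nseq_bi.
rewrite !wT_nseq_a ?wT_nseq_ai ?geq_minr // /ht /cv /=.
case: ifP => h1; [|case: ifP => h2; [|case: ifP => h3; [|case: ifP => h4]]]; fixmin.
all: rewrite ?mul0r ?oppr0 ?addr0 ?add0r; split; try lia.
all: have e4 : m%:Z * 1 + m%:Z * -1 + m%:Z * 1 + m%:Z * -1 = 0 by lia.
all: have e3 : m%:Z * 1 + m%:Z * -1 + m%:Z * 1 = m by lia.
all: have e2 : m%:Z * 1 + m%:Z * -1 = 0 by lia.
all: have e1 : m%:Z * 1 = m by lia.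
all: rewrite ?e4 ?e3 ?e2 ?e1 ?expr0z -?exprnP ?natrX ?mul1r ?natrD //.
all: rewrite -?natrX; ring.
Qed.


Lemma B1' n w (h1 h2 : nat) (D : rat) : (2 < n)%N -> wE h1 w = h2 -> wT n h1 w = D ->
  D = 1 \/ D = -1 -> (h1 + h2 + 1 <= size w)%N.
Proof.
move=> hn hE hT hD; apply: (B1 _ _ _ _ _ hn hE hT).
by case: hD => ->; rewrite ?normrN normr1.
Qed.

Lemma B2' n m w (h1 h2 : nat) (D : rat) : (2 < n)%N -> wE h1 w = h2 -> wT n h1 w = D ->
  D = (n ^ m)%:R \/ D = - (n ^ m)%:R -> (2 * m + 1 <= size w + h1 + h2)%N.
Proof.
move=> hn hE hT hD; apply: (B2 _ _ _ _ _ _ hn hE hT).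
by case: hD => ->; rewrite ?normrN normr_nat.
Qed.

Lemma B3' n m w (h1 h2 : nat) (D : rat) : (2 < n)%N -> (2 <= m)%N -> wE h1 w = h2 -> wT n h1 w = D ->
  (D = (n ^ m + 1)%:R \/ D = - (n ^ m + 1)%:R) \/ (D = (n ^ m - 1)%:R \/ D = - (n ^ m - 1)%:R) ->
  (2 * m + 2 <= size w + (h1 - h2) + (h2 - h1))%N.
Proof.
move=> hn hm hE hT hD; apply: (B3 _ _ _ _ _ _ hn hm hE hT).
by case: hD => [[]|[]] ->; rewrite ?normrN normr_nat; [left|left|right|right].
Qed.

Ltac solve_eq hnm1 := rewrite ?natrD ?(natrB _ hnm1); ring.

Lemma mainlem n m p q w : (2 < n)%N -> (2 <= m)%N -> (p < q)%N -> (q <= 4 * m + 4)%N ->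
  wE (ht m p) w = ht m q -> wT n (ht m p) w = cv n m q - cv n m p ->
  (q - p <= size w)%N \/ (4 * m + 4 - (q - p) <= size w)%N.
Proof.
move=> hn hm hpq hq hE hT.
have hnm1 : (1 <= n ^ m)%N by rewrite expn_gt0; lia.
have hB0 := B0 _ _ _ hE.
move: hE hT hB0; rewrite /ht /cv.
case: ifP => p1; [|case: ifP => p2; [|case: ifP => p3; [|case: ifP => p4]]];
case: ifP => q1; try (case: ifP => q2); try (case: ifP => q3); try (case: ifP => q4);
  move=> hE hT hB0; try lia.
all: first [
    have := B1' _ _ _ _ _ hn hE hT ltac:(first [left; solve_eq hnm1 | right; solve_eq hnm1]); lia
  | have := B2' _ _ _ _ _ _ hn hE hT ltac:(first [left; solve_eq hnm1 | right; solve_eq hnm1]); lia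
  | have := B3' _ _ _ _ _ _ hn hm hE hT ltac:(first [left; left; solve_eq hnm1 | left; right; solve_eq hnm1
                                         | right; left; solve_eq hnm1 | right; right; solve_eq hnm1]); lia
  ].
Qed.


Lemma word_val_walk n u : (0 < n)%N -> word_val n u = (wE 0 u, wT n 0 u).
Proof.
move=> n0; have := walk_correct n n0 u 0 0; rewrite add0r => <-.
by case: (word_val n u) => a b; rewrite /bs_mul /= add0r expr0z mul1r addr0.
Qed.

Lemma size_cyc m : size (cyc m) = (4 * m + 4)%N.
Proof. rewrite /cyc !size_cat !size_nseq; lia. Qed.

Lemma sub_walk n m (i j : nat) w' : (2 < n)%N -> (i <= j.+1)%N -> (j.+1 <= 4 * m + 4)%N ->
  word_val n (subword (cyc m) i j) = word_val n w' ->
  wE (ht m i) w' = ht m j.+1 /\ wT n (ht m i) w' = cv n m j.+1 - cv n m i.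
Proof.
move=> hn hij hj hw.
have n0 : (0 < n)%N by lia.
have htk : take j.+1 (cyc m) = take i (cyc m) ++ subword (cyc m) i j.
  by rewrite /subword -{1}(cat_take_drop i (take j.+1 (cyc m))) (take_takel _ hij).
have [Ei Ti] := vert n m i n0 (leq_trans hij hj).
have [Ej Tj] := vert n m j.+1 n0 hj.
have := walk_correct n n0 w' (ht m i) 0; rewrite -hw walk_correct // => -[E1 E2].
rewrite htk wE_cat wT_cat Ei Ti in Ej Tj.
split; first by rewrite -E1.
rewrite !add0r in E2; rewrite -E2 -Tj; ring.
Qed.

Close Scope ring_scope.

Theorem theorem13 (n : nat) (hn : 2 < n) (k : nat) (hk : 0 < k) :
  ~ k_chordal n k.
Proof.
move=> Hc.
pose m := k.+2.
have hm : 2 <= m by rewrite /m; lia.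
have n0 : 0 < n by lia.
have hsimple : simple_relation n (cyc m).
  split; first by rewrite size_cyc; lia.
  move=> p q hpq; rewrite size_cyc => hq; split.
    move=> hw.
    have hw' : word_val n (subword (cyc m) p q) = word_val n [::] by rewrite hw.
    have [E T] := sub_walk n m p q [::] hn (leq_trans hpq (leqnSn q)) hq hw'.
    have := mainlem n m p q.+1 [::] hn hm hpq hq E T.
    rewrite /=; lia.
  case=> -> ->.
  have -> : (4 * m + 4).-1 = (4 * m + 3) by lia.
  rewrite /subword drop0 word_val_walk //.
  have [-> ->] := vert n m (4 * m + 3).+1 n0 ltac:(lia).
  rewrite /ht /cv /bs_one.
  by rewrite !ifF //; apply/negbTE; lia.
have [i [j [w' [hij hj Hw hs1 hs2]]]] := Hc (cyc m) hsimple ltac:(rewrite size_cyc; lia).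
rewrite size_cyc in hj hs2.
have [E T] := sub_walk n m i j w' hn ltac:(lia) hj Hw.
have := mainlem n m i j.+1 w' hn hm ltac:(lia) hj E T.
lia.
Qed.
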